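(* Let $\mathcal{P}$ be a locally finite poset and let $J$ and $\mu$ be as in the context. Then for every $(x,y,z)\in \mathcal{F}l^3(\mathcal{P})$ we have $$J(x,y,z)=\mu(x,y)\,\mu(y,z).$$
   Context: For a locally finite poset $\mathcal{P}$, let $\mathcal{F}l^2(\mathcal{P})=\{(x,y)\in\mathcal{P}^2: x\le y\}$ and $\mathcal{F}l^3(\mathcal{P})=\{(x,y,z)\in\mathcal{P}^3: x\le y\le z\}$. The Möbius function $\mu:\mathcal{F}l^2(\mathcal{P})\to\mathbb{Z}$ is defined by $\mu(x,x)=1$ and $\sum_{x\le a\le y}\mu(x,a)=0$ for $x<y$. Let $\delta_3(x,y,z)=1$ if $x=y=z$ and $0$ otherwise. The function $J:\mathcal{F}l^3(\mathcal{P})\to\mathbb{Z}$ is the unique function satisfying, for all $(x,y,z)\in\mathcal{F}l^3(\mathcal{P})$, $$\sum_{\substack{a,b\in\mathcal{P}\\ x\le a\le y\le b\le z}} J(a,y,b)=\delta_3(x,y,z).$$ *)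

(* Defs.v *)
From HB Require Import structures.
From mathcomp Require Import all_boot all_order all_algebra.
Set Implicit Arguments. Unset Strict Implicit. Unset Printing Implicit Defensive.
Import Order.TTheory GRing.Theory Num.Theory.

Local Open Scope order_scope.

(* A poset (T, <=) is locally finite when every closed interval [x,y] is
   finite; we witness this by a duplicate-free enumeration [itv x y] of the
   interval [x,y] = {a | x <= a <= y}. *)
Definition interval_enum (d : Order.disp_t) (T : porderType d)
    (itv : T -> T -> seq T) : Prop :=
  forall x y : T, uniq (itv x y) /\ (forall a, (a \in itv x y) = (x <= a <= y)).

Definition is_moebius (d : Order.disp_t) (T : porderType d)
    (itv : T -> T -> seq T) (mu : T -> T -> int) : Prop :=
  (forall x : T, mu x x = 1%R) /\
  (forall x y : T, x < y -> (\sum_(a <- itv x y) mu x a)%R = 0%R).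

Definition delta3 (d : Order.disp_t) (T : porderType d) (x y z : T) : int :=
  if (x == y) && (y == z) then 1%R else 0%R.

Definition is_J (d : Order.disp_t) (T : porderType d)
    (itv : T -> T -> seq T) (J : T -> T -> T -> int) : Prop :=
  forall x y z : T, x <= y -> y <= z ->
    (\sum_(a <- itv x y) \sum_(b <- itv y z) J a y b)%R = delta3 x y z.

(* Main.v *)
Require Import Defs.
From HB Require Import structures.
From mathcomp Require Import all_boot all_order all_algebra.
From mathcomp Require Import ring zify.
Import Order.TTheory GRing.Theory Num.Theory.
Set Implicit Arguments. Unset Strict Implicit.
Local Open Scope ring_scope.


Lemma itv_sum1 d (T : porderType d) (itv : T -> T -> seq T) (F : T -> int) x :
  interval_enum itv -> \sum_(a <- itv x x) F a = F x.
Proof.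
move=> He; case: (He x x) => Hu Hm.
rewrite (perm_big [:: x]) ?big_seq1 //.
apply: uniq_perm => // a; rewrite Hm inE -eq_le; by apply/idP/idP => /eqP->.
Qed.

Lemma mu_sum d (T : porderType d) (itv : T -> T -> seq T) mu x z :
  interval_enum itv -> is_moebius itv mu -> (x <= z)%O ->
  \sum_(a <- itv x z) mu x a = (x == z)%:R.
Proof.
move=> He [H1 H2] Hxz; case: eqP => [<-|/eqP ne].
  by rewrite itv_sum1 // H1.
by rewrite H2 // lt_neqAle ne Hxz.
Qed.

Lemma sum_subr d (T : porderType d) (itv : T -> T -> seq T) (F : T -> int) x y a :
  interval_enum itv -> (x <= a)%O -> (a <= y)%O ->
  \sum_(c <- itv a y) F c = \sum_(c <- itv x y | (a <= c)%O) F c.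
Proof.
move=> He Hxa Hay; rewrite -[RHS]big_filter; apply: perm_big.
case: (He a y) => Hu Hm; case: (He x y) => Hu' Hm'.
apply: uniq_perm => //; first exact: filter_uniq.
move=> c; rewrite mem_filter Hm Hm'.
case: (boolP (a <= c)%O) => //= Hac.
by rewrite (le_trans Hxa Hac).
Qed.

Lemma sum_subl d (T : porderType d) (itv : T -> T -> seq T) (F : T -> int) x y c :
  interval_enum itv -> (x <= c)%O -> (c <= y)%O ->
  \sum_(a <- itv x c) F a = \sum_(a <- itv x y | (a <= c)%O) F a.
Proof.
move=> He Hxc Hcy; rewrite -[RHS]big_filter; apply: perm_big.
case: (He x c) => Hu Hm; case: (He x y) => Hu' Hm'.
apply: uniq_perm => //; first exact: filter_uniq.
move=> a; rewrite mem_filter Hm Hm'.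
case: (boolP (a <= c)%O) => Hac; rewrite ?andbF ?andbT ?andbF //=.
by rewrite (le_trans Hac Hcy) andbT.
Qed.

Lemma sum_sel (T : eqType) (s : seq T) (F : T -> int) y :
  uniq s -> y \in s -> \sum_(a <- s) F a * (a == y)%:R = F y.
Proof.
move=> Hu Hy; rewrite (big_rem y) //= eqxx mulr1 big_seq big1 ?addr0 //.
move=> a; rewrite mem_rem_uniq // inE => /andP[/negbTE -> _]; by rewrite mulr0.
Qed.

Lemma dual d (T : porderType d) (itv : T -> T -> seq T) mu (K : T -> int) m x y :
  interval_enum itv -> is_moebius itv mu -> (x <= y)%O ->
  (forall a, (x <= a)%O -> (a <= y)%O -> \sum_(c <- itv a y) K c = (a == y)%:R * m) ->
  K x = mu x y * m.
Proof.
move=> He Hmu Hxy HK.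
case: (He x y) => Hu Hm.
have E1 : \sum_(a <- itv x y) mu x a * \sum_(c <- itv a y) K c = mu x y * m.
  transitivity (\sum_(a <- itv x y) (mu x a * m) * (a == y)%:R).
    rewrite big_seq [RHS]big_seq; apply: eq_bigr => a; rewrite Hm => /andP[h1 h2].
    by rewrite HK //; ring.
  by rewrite (sum_sel (fun a => mu x a * m)) // Hm lexx Hxy.
have E2 : \sum_(c <- itv x y) K c * \sum_(a <- itv x c) mu x a = K x.
  transitivity (\sum_(c <- itv x y) K c * (c == x)%:R).
    rewrite big_seq [RHS]big_seq; apply: eq_bigr => c; rewrite Hm => /andP[h1 h2].
    by rewrite (mu_sum He Hmu h1) eq_sym.
  by rewrite sum_sel // Hm lexx Hxy.
rewrite -E1 -E2; symmetry.
transitivity (\sum_(a <- itv x y) \sum_(c <- itv x y | (a <= c)%O) mu x a * K c).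
  rewrite big_seq [RHS]big_seq; apply: eq_bigr => a; rewrite Hm => /andP[h1 h2].
  by rewrite (@sum_subr _ _ itv K x y a He h1 h2) mulr_sumr.
transitivity (\sum_(c <- itv x y) \sum_(a <- itv x y | (a <= c)%O) mu x a * K c).
  under eq_bigr do rewrite big_mkcond.
  rewrite exchange_big; apply: eq_bigr => c _; by rewrite [RHS]big_mkcond.
rewrite big_seq [RHS]big_seq; apply: eq_bigr => c; rewrite Hm => /andP[h1 h2].
rewrite (@sum_subl _ _ itv (mu x) x y c He h1 h2) mulr_sumr; apply: eq_bigr => a _; by rewrite mulrC.
Qed.

Lemma right_uniq d (T : porderType d) (itv : T -> T -> seq T) (g : T -> int) y :
  interval_enum itv ->
  (forall z, (y <= z)%O -> \sum_(b <- itv y z) g b = 0) ->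
  forall z, (y <= z)%O -> g z = 0.
Proof.
move=> He Hg z.
move: {2}(size (itv y z)) (leqnn (size (itv y z))) => n.
elim: n z => [|n IH] z Hn Hyz.
  case: (He y z) => _ Hm.
  have : z \in itv y z by rewrite Hm Hyz lexx.
  by case: (itv y z) Hn.
case: (He y z) => Hu Hm.
have Hz : z \in itv y z by rewrite Hm Hyz lexx.
have := Hg z Hyz; rewrite (big_rem z) //= big_seq big1 ?addr0 // => b.
rewrite mem_rem_uniq // inE => /andP[ne]; rewrite Hm => /andP[h1 h2].
apply: IH => //.
have Hs : (size (itv y b) <= size (rem z (itv y z)))%N.
  case: (He y b) => Hu' Hm'; apply: uniq_leq_size => // c.
  rewrite Hm' mem_rem_uniq // inE Hm => /andP[c1 c2].
  rewrite c1 (le_trans c2 h2) andbT /=.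
  rewrite andbT; by apply: contraTneq c2 => ->; rewrite lt_geF // lt_neqAle ne h2.
rewrite size_rem // in Hs.
have Hp : (0 < size (itv y z))%N by case: (itv y z) Hz.
rewrite -ltnS; apply: leq_trans Hn; apply: (leq_ltn_trans Hs); by rewrite prednK.
Qed.

Theorem theorem5p2 (d : Order.disp_t) (T : porderType d)
    (itv : T -> T -> seq T) (mu : T -> T -> int) (J : T -> T -> T -> int) :
  interval_enum itv -> is_moebius itv mu -> is_J itv J ->
  forall x y z : T, (x <= y)%O -> (y <= z)%O ->
    J x y z = (mu x y * mu y z)%R.
Proof.
move=> He Hmu HJ x y z Hxy Hyz.
have H1 : forall a b, (a <= y)%O -> (y <= b)%O ->
    \sum_(c <- itv a y) J c y b = (a == y)%:R * mu y b.
  move=> a b Hay Hyb; apply/eqP; rewrite -subr_eq0; apply/eqP.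
  apply: (@right_uniq _ _ itv (fun b => \sum_(c <- itv a y) J c y b - (a == y)%:R * mu y b) y He _ b Hyb).
  move=> z' Hyz'; rewrite big_split /= exchange_big HJ // sumrN.
  rewrite -mulr_sumr (mu_sum He Hmu Hyz') /delta3.
  by case: (a == y); case: (y == z'); rewrite /= ?mul1r ?mul0r subrr.
apply: (@dual _ _ itv mu (fun c => J c y z) (mu y z) x y He Hmu Hxy) => a _ Hay; exact: H1.
Qed.
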